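(* In the setting below, for each $n\in\mathbb{N}_0$ and $i,j=1,\dots,N$, $$|x_i(s)-x_j(t)|\le d(t_{2n+2})\quad\forall s,t\in[t_{2n+1},t_{2n+2}].$$
   Context: Setting: $N\ge2$; $\psi:\mathbb{R}^d\times\mathbb{R}^d\to\mathbb{R}$ positive, bounded, continuous, $K:=\|\psi\|_\infty$; $\{t_n\}_{n\in\mathbb{N}_0}$ increasing, nonnegative, $t_0=0$, $t_n\to\infty$; $\alpha(0)=1$, $\alpha=1$ on $(t_{2n},t_{2n+1})$, $\alpha=-1$ on $[t_{2n+1},t_{2n+2}]$; $\{x_i\}$ solves $x_i'(t)=\frac1{N-1}\sum_{j\ne i}\alpha(t)\psi(x_i(t),x_j(t))(x_j(t)-x_i(t))$, $t>0$, $x_i(0)=x_i^0\in\mathbb{R}^d$ (continuous, $C^1$ on each $(t_n,t_{n+1})$). $d(t):=\max_{i,j}|x_i(t)-x_j(t)|$. Standing assumptions: $t_{2n+2}-t_{2n+1}<\frac{\ln 2}{K}$ for all $n$; $\sum_{p\ge0}\ln\frac{e^{K(t_{2p+2}-t_{2p+1})}}{2-e^{K(t_{2p+2}-t_{2p+1})}}<\infty$; $\sum_{p\ge0}\ln\max\{1-e^{-K(t_{2p+1}-t_{2p})},1-\frac{\psi_0}{K}(1-e^{-K(t_{2p+1}-t_{2p})})\}=-\infty$, with $\psi_0=\min_{|y|,|z|\le M^0}\psi(y,z)$, $M^0=e^{K\sum_{p}(t_{2p+2}-t_{2p+1})}\max_i|x_i^0|$. *)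

(* Defs.v *)
From HB Require Import structures.
From mathcomp Require Import all_boot all_order all_algebra.
From mathcomp Require Import all_classical all_reals all_analysis.
Set Implicit Arguments. Unset Strict Implicit. Unset Printing Implicit Defensive.
Import Order.TTheory GRing.Theory Num.Theory.
Import numFieldNormedType.Exports.
Local Open Scope classical_set_scope.
Local Open Scope ring_scope.

Definition enorm {R : realType} {d : nat} (v : 'rV[R]_d) : R :=
  Num.sqrt (\sum_(k < d) v ord0 k ^+ 2).

(* K := ||psi||_oo (psi is positive, so this is the sup of its values) *)
Definition psi_sup {R : realType} {d : nat} (psi : 'rV[R]_d -> 'rV[R]_d -> R) : R :=
  sup [set psi y z | y in [set: 'rV[R]_d] & z in [set: 'rV[R]_d]].

(* psi_0 := min_{|y|,|z| <= M} psi(y,z) (attained by compactness/continuity) *)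
Definition psi_min_on {R : realType} {d : nat} (psi : 'rV[R]_d -> 'rV[R]_d -> R) (M : R) : R :=
  inf [set psi y z | y in [set y | enorm y <= M] & z in [set z | enorm z <= M]].

Definition diam {R : realType} {d N : nat} (x : 'I_N -> R -> 'rV[R]_d) (t : R) : R :=
  \big[Num.max/0]_(i < N) \big[Num.max/0]_(j < N) enorm (x i t - x j t).

(* Main.v *)
Require Import Defs.
From HB Require Import structures.
From mathcomp Require Import all_boot all_order all_algebra.
From mathcomp Require Import all_classical all_reals all_analysis.
From mathcomp Require Import ring lra.
Import Order.TTheory GRing.Theory Num.Theory.
Import numFieldNormedType.Exports.
Local Open Scope classical_set_scope.
Local Open Scope ring_scope.

Lemma bigmax_ge_ord {R : realType} (N : nat) (F : 'I_N -> R) x0 l :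
  F l <= \big[Num.max/x0]_(i < N) F i.
Proof.
have : l \in index_enum 'I_N by rewrite mem_index_enum.
rewrite /index_enum; elim: (Finite.enum _) => //= y s IH.
rewrite in_cons big_cons => /orP[/eqP<-|/IH H]; first by rewrite le_max lexx.
by rewrite le_max H orbT.
Qed.

Lemma bigmax_attained {R : realType} (N : nat) (F : 'I_N -> R) k0 :
  exists l, \big[Num.max/F k0]_(i < N) F i = F l.
Proof.
apply: (big_ind (fun v => exists l, v = F l)); first by exists k0.
  move=> u v [l1 ->] [l2 ->]; rewrite /Num.max; case: ifP => _.
    by exists l2.
  by exists l1.
by move=> l _; exists l.
Qed.

Lemma bigmax_cont {R : realType} (N : nat) (F : 'I_N -> R -> R) g t :
  {for t, continuous g} -> (forall l, {for t, continuous (F l)}) ->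
  {for t, continuous (fun s => \big[Num.max/g s]_(l < N) F l s)}.
Proof.
move=> cg cF.
have -> : (fun s => \big[Num.max/g s]_(l < N) F l s) =
   \big[(fun u v : R -> R => u \max v)/g]_(l < N) F l.
  apply: funext => s.
  by rewrite (big_morph (fun h : R -> R => h s) (id1 := g s) (op1 := Num.max)).
apply: (big_ind (fun h : R -> R => {for t, continuous h})) => //.
by move=> u v cu cv; apply: continuous_max.
Qed.

Lemma sum_cont {R : realType} (N : nat) (F : 'I_N -> R -> R) t :
  (forall l, {for t, continuous (F l)}) ->
  {for t, continuous (fun s => \sum_(l < N) F l s)}.
Proof.
move=> cF; rewrite -fct_sumE.
apply: (big_ind (fun h : R -> R => {for t, continuous h})) => //.
  exact: cvg_cst.
by move=> u v cu cv; apply: continuousD.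
Qed.

Lemma rdiff_le {R : realType} (f : R -> R) c b e : c < b -> derivable f c 1 ->
  (forall t, c < t < b -> f t - f c <= - e * (t - c)) -> 'D_1 f c <= - e.
Proof.
move=> cb df H.
rewrite ['D_1 f c]cvg_at_rightE; last exact: df.
apply: limr_le.
  rewrite -(cvg_at_rightE (fun h : R => h^-1 *: ((f \o shift c) _ - f c))) //.
  apply: cvg_trans df; apply: cvg_app.
  move=> A [r r0 Ar]; exists r => // x xe xgt0; apply: Ar => //.
  exact/lt0r_neq0.
near=> h.
have h0 : 0 < h by near: h; exists 1 => /=.
have hb : h < b - c.
  near: h; exists (b - c); first by rewrite /= subr_gt0.
  by move=> h; rewrite /= distrC subr0 => /(le_lt_trans (ler_norm _)).
rewrite /= [_%:A]mulr1.
rewrite -(@ler_pM2l _ h) // mulrA mulrV ?unitfE ?gt_eqF // mul1r mulrC.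
have := H (h + c); rewrite addrK (addrC h c); apply.
by rewrite ltrDl h0 /= -ltrBrDl.
Unshelve. all: by end_near. Qed.


Lemma key_step {R : realType} (N : nat) (f : 'I_N -> R -> R) a b :
  a < b ->
  (forall k t, a <= t <= b -> {for t, continuous (f k)}) ->
  (forall k t, a < t < b -> derivable (f k) t 1) ->
  (forall k t, a < t < b -> (forall l, f l t <= f k t) -> 0 <= 'D_1 (f k) t) ->
  forall m, (forall l, f l b <= m) -> forall k0 s0, a < s0 <= b -> f k0 s0 <= m.
Proof.
move=> ab cf df dpos m mb k0 s0 /andP[as0 s0b].
rewrite leNgt; apply/negP => Hm.
set D := f k0 s0 - m.
have D0 : 0 < D by rewrite subr_gt0.
set L := b - s0.
have L0 : 0 <= L by rewrite subr_ge0.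
set e := D / (L + 1).
have e0 : 0 < e by rewrite divr_gt0 // ltr_wpDl.
have eL : e * L < D.
  have -> : e * L = D - e by rewrite /e; field; rewrite gt_eqF // ltr_wpDl.
  by rewrite ltrBlDr ltrDl.
pose M t := \big[Num.max/f k0 t]_(l < N) f l t.
pose Phi t := M t + e * t.
have cPhi : {within `[s0, b], continuous Phi}.
  apply: continuous_in_subspaceT => t; rewrite inE /= in_itv /= => /andP[st tb].
  have tab : a <= t <= b by rewrite tb (le_trans (ltW as0) st).
  apply: continuousD.
    by apply: bigmax_cont => [|l]; apply: cf.
  by apply: continuousM; [exact: cvg_cst|exact: cvg_id].
have [c cI cmax] := EVT_max s0b cPhi.
move: (cI); rewrite in_itv /= => /andP[s0c cb].
have Phis0 : f k0 s0 + e * s0 <= Phi c.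
  apply: le_trans (cmax s0 _); last by rewrite in_itv /= lexx s0b.
  by rewrite lerD2r bigmax_ge_ord.
have Phib : Phi b < f k0 s0 + e * s0.
  rewrite /Phi /M; have [l ->] := bigmax_attained _ (fun l => f l b) k0.
  have eL' : e * b - e * s0 < f k0 s0 - m by rewrite -mulrBr.
  have := mb l; lra.
have cb' : c < b.
  rewrite lt_neqAle cb andbT; apply/eqP => cbE; move: Phis0; rewrite cbE.
  by rewrite leNgt Phib.
have ac : a < c < b by rewrite cb' (lt_le_trans as0 s0c).
have [k Mk] := bigmax_attained _ (fun l => f l c) k0.
have kmax : forall l, f l c <= f k c.
  by move=> l; rewrite -Mk; apply: bigmax_ge_ord.
have := dpos k c ac kmax.
have : 'D_1 (f k) c <= - e.
  apply: rdiff_le cb' (df k c ac) _ => t /andP[ct tb].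
  have : Phi t <= Phi c by apply: cmax; rewrite in_itv /= (ltW tb) (le_trans s0c (ltW ct)).
  rewrite /Phi /M Mk => H.
  have H2 : f k t + e * t <= f k c + e * c.
    by apply: le_trans H; rewrite lerD2r bigmax_ge_ord.
  move: H2; rewrite mulNr mulrBr; lra.
move=> H1 H2; have := le_trans H2 H1; lra.
Qed.

Lemma key {R : realType} (N : nat) (f : 'I_N -> R -> R) a b :
  a < b ->
  (forall k t, a <= t <= b -> {for t, continuous (f k)}) ->
  (forall k t, a < t < b -> derivable (f k) t 1) ->
  (forall k t, a < t < b -> (forall l, f l t <= f k t) -> 0 <= 'D_1 (f k) t) ->
  forall m, (forall l, f l b <= m) -> forall k0 s0, a <= s0 <= b -> f k0 s0 <= m.
Proof.
move=> ab cf df dpos m mb k0 s0 /andP[as0 s0b].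
have [as0'|] := ltP a s0; first by apply: (@key_step R N f a b ab cf df dpos m mb); rewrite as0' s0b.
move=> s0a; have {as0 s0a} s0a : s0 = a by apply/eqP; rewrite eq_le s0a as0.
subst s0.
rewrite leNgt; apply/negP => Hm.
have cfa := cf k0 a; rewrite lexx (ltW ab) in cfa.
have := cvgr_gt (f k0 a) (cfa isT) m Hm.
move=> Hn; have [r /= r0 Hr] := (nbhs_ballP _ _).1 (Hn _).
set mm := Num.min r (b - a).
have h1 : mm <= b - a by rewrite /mm ge_min lexx orbT.
have h2 : mm <= r by rewrite /mm ge_min lexx.
have mpos : 0 < mm by rewrite lt_min r0 subr_gt0.
set t := a + mm / 2.
have at0 : a < t by rewrite /t; lra.
have tb : t <= b by rewrite /t; lra.
have := @key_step R N f a b ab cf df dpos m mb k0 t; rewrite at0 tb => /(_ isT).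
rewrite leNgt; move/negP; apply; apply: Hr.
rewrite /ball /= /t opprD addrA subrr add0r normrN gtr0_norm; lra.
Qed.


Definition dot {R : realType} {d : nat} (v w : 'rV[R]_d) : R := \sum_(c < d) v ord0 c * w ord0 c.

Lemma dotB {R : realType} d (v w1 w2 : 'rV[R]_d) : dot v (w1 - w2) = dot v w1 - dot v w2.
Proof. by rewrite /dot -sumrB; apply: eq_bigr => c _; rewrite !mxE mulrBr. Qed.

Lemma dotZ {R : realType} d (v w : 'rV[R]_d) k : dot v (k *: w) = k * dot v w.
Proof. by rewrite /dot mulr_sumr; apply: eq_bigr => c _; rewrite mxE mulrCA. Qed.

Lemma dotNl {R : realType} d (v w : 'rV[R]_d) : dot (- v) w = - dot v w.
Proof. by rewrite /dot -sumrN; apply: eq_bigr => c _; rewrite mxE mulNr. Qed.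

Lemma dot_sum {R : realType} d (N : nat) (P : pred 'I_N) (v : 'rV[R]_d) (u : 'I_N -> 'rV[R]_d) :
  dot v (\sum_(j < N | P j) u j) = \sum_(j < N | P j) dot v (u j).
Proof.
rewrite /dot; under eq_bigr do rewrite summxE mulr_sumr.
exact: exchange_big.
Qed.

Lemma dot_amgm {R : realType} d (v u : 'rV[R]_d) : 2 * dot v u <= dot v v + dot u u.
Proof.
have H : 0 <= \sum_(c < d) (v ord0 c - u ord0 c) ^+ 2 by apply: sumr_ge0 => c _; exact: sqr_ge0.
suff E : \sum_(c < d) (v ord0 c - u ord0 c) ^+ 2 = dot v v + dot u u - 2 * dot v u.
  by move: H; rewrite E subr_ge0.
rewrite /dot mulr_sumr -big_split -sumrB; apply: eq_bigr => c _ /=; ring.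
Qed.

Lemma dot_derive {R : realType} d (g : R -> 'rV[R]_d) w t : derivable g t 1 ->
  derivable (fun s => dot w (g s)) t 1 /\
  'D_1 (fun s => dot w (g s)) t = dot w ('D_1 g t).
Proof.
move=> dg.
have dc : forall c, derivable (fun s => g s ord0 c) t 1.
  by move=> c; exact: ((derivable_mxP _ _ _).1 dg ord0 c).
have H : is_derive t 1 (fun s => dot w (g s)) (dot w ('D_1 g t)).
  have -> : (fun s => dot w (g s)) = \sum_(c < d) (fun s => w ord0 c * g s ord0 c).
    by rewrite fct_sumE.
  rewrite (derive_mx dg) /dot; apply: is_derive_sum => c; rewrite mxE.
  exact: (is_deriveZ (w ord0 c) (derivableP (dc c))).
split; [exact: ex_derive | exact: derive_val].
Qed.

Lemma dot_cont {R : realType} d (g : R -> 'rV[R]_d) w t : {for t, continuous g} ->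
  {for t, continuous (fun s => dot w (g s))}.
Proof.
move=> cg; rewrite /dot; apply: sum_cont => c.
apply: continuousM; first exact: cvg_cst.
have := continuous_comp cg (@coord_continuous R 1 d ord0 c (g t)); exact.
Qed.


Theorem lemma3p5 (R : realType) (d N : nat) (psi : 'rV[R]_d -> 'rV[R]_d -> R)
  (tn : nat -> R) (alpha : R -> R) (x : 'I_N -> R -> 'rV[R]_d) :
  (2 <= N)%N ->
  (* psi positive, bounded, continuous *)
  (forall y z, 0 < psi y z) ->
  (exists M : R, forall y z, psi y z <= M) ->
  continuous (fun p : 'rV[R]_d * 'rV[R]_d => psi p.1 p.2) ->
  (* switching times *)
  tn 0%N = 0 ->
  (forall n, tn n < tn n.+1) ->
  tn @ \oo --> +oo ->
  (* the sign function alpha *)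
  alpha 0 = 1 ->
  (forall n s, tn (2 * n)%N < s < tn (2 * n).+1 -> alpha s = 1) ->
  (forall n s, tn (2 * n).+1 <= s <= tn (2 * n).+2 -> alpha s = -1) ->
  (* x solves the system: continuous on [0,oo), C^1 on each (t_n, t_{n+1}) *)
  (forall i, {within [set t : R | 0 <= t], continuous (x i)}) ->
  (forall i n s, tn n < s < tn n.+1 -> derivable (x i) s 1) ->
  (forall i n, {in `]tn n, tn n.+1[, continuous (derive1 (x i))}) ->
  (forall i n s, tn n < s < tn n.+1 ->
     derive1 (x i) s = (N%:R - 1)^-1 *:
       \sum_(j < N | j != i) ((alpha s * psi (x i s) (x j s)) *: (x j s - x i s))) ->
  (* standing assumptions *)
  (forall n, tn (2 * n).+2 - tn (2 * n).+1 < ln 2 / psi_sup psi) ->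
  cvgn (series (fun p => ln (expR (psi_sup psi * (tn (2 * p).+2 - tn (2 * p).+1)) /
                         (2 - expR (psi_sup psi * (tn (2 * p).+2 - tn (2 * p).+1)))))) ->
  (let K := psi_sup psi in
   let M0 := expR (K * limn (series (fun p => tn (2 * p).+2 - tn (2 * p).+1))) *
             \big[Num.max/0]_(i < N) enorm (x i 0) in
   let psi0 := psi_min_on psi M0 in
   series (fun p => ln (Num.max (1 - expR (- K * (tn (2 * p).+1 - tn (2 * p))))
                          (1 - psi0 / K * (1 - expR (- K * (tn (2 * p).+1 - tn (2 * p)))))))
     @ \oo --> -oo) ->
  forall (n : nat) (i j : 'I_N) (s t : R),
    tn (2 * n).+1 <= s <= tn (2 * n).+2 ->
    tn (2 * n).+1 <= t <= tn (2 * n).+2 ->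
    enorm (x i s - x j t) <= diam x (tn (2 * n).+2).
Proof.
move=> N2 psipos _ _ tn0 tninc _ _ _ alpham xcont xder _ xode _ _ _ n i j s t Hs Ht.
set a := tn (2 * n)%N.+1 in Hs Ht *; set b := tn (2 * n)%N.+2 in Hs Ht *.
have tn_ge0 : forall k, 0 <= tn k.
  by elim => [|k IH]; [rewrite tn0 | exact: le_trans IH (ltW (tninc k))].
have ab : a < b := tninc _.
have a0 : 0 < a := le_lt_trans (tn_ge0 _) (tninc _).
have xc : forall k u, 0 < u -> {for u, continuous (x k)}.
  move=> k u u0; have := xcont k.
  have -> : [set t : R | 0 <= t] = `[0, +oo[%classic.
    by apply/seteqP; split=> y /=; rewrite in_itv /= andbT.
  move/continuous_within_itvcyP => [H _]; apply: H; rewrite in_itv /= andbT //.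
have xd : forall k u, a < u < b -> derivable (x k) u 1.
  by move=> k u H; exact: (xder k (2 * n).+1 u H).
have xD : forall k u, a < u < b -> 'D_1 (x k) u = (N%:R - 1)^-1 *:
       \sum_(l < N | l != k) ((-1 * psi (x k u) (x l u)) *: (x l u - x k u)).
  move=> k u H; rewrite -derive1E (xode k (2 * n).+1 u H) (alpham n u) //.
  by case/andP: H => /ltW -> /ltW ->.
have dpos : forall (w : 'rV[R]_d) k u, a < u < b ->
    (forall l, dot w (x l u) <= dot w (x k u)) ->
    0 <= 'D_1 (fun s => dot w (x k s)) u.
  move=> w k u H Hmax; rewrite (dot_derive _ _ w _ (xd k u H)).2 (xD k u H) dotZ dot_sum.
  apply: mulr_ge0.
    rewrite invr_ge0 subr_ge0 ler1n; exact: ltnW.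
  apply: sumr_ge0 => l _; rewrite dotZ dotB mulN1r mulNr -mulrN opprB.
  by apply: mulr_ge0; [exact: ltW | rewrite subr_ge0].
have cf : forall (w : 'rV[R]_d) k u, a <= u <= b -> {for u, continuous (fun s => dot w (x k s))}.
  move=> w k u /andP[au _]; apply: dot_cont; apply: xc; exact: lt_le_trans a0 au.
have df : forall (w : 'rV[R]_d) k u, a < u < b -> derivable (fun s => dot w (x k s)) u 1.
  by move=> w k u H; exact: (dot_derive _ _ w _ (xd k u H)).1.
have bound : forall (w : 'rV[R]_d) k u, a <= u <= b -> exists p, dot w (x k u) <= dot w (x p b).
  move=> w k u Hu.
  have [p Hp] := bigmax_attained _ (fun l => dot w (x l b)) k.
  exists p; rewrite -Hp.
  apply: (@key R N (fun k s => dot w (x k s)) a b ab (cf w) (df w) (dpos w)) => //.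
  by move=> l; exact: (bigmax_ge_ord _ (fun l => dot w (x l b))).
set v := x i s - x j t.
have [p Hp] := bound v i s Hs.
have [q Hq] := bound (- v) j t Ht.
rewrite !dotNl lerN2 in Hq.
set u := x p b - x q b.
have H1 : dot v v <= dot v u by rewrite /v /u !dotB; lra.
have H2 := dot_amgm _ v u.
have H3 : dot v v <= dot u u by lra.
have en : forall w : 'rV[R]_d, enorm w = Num.sqrt (dot w w).
  by move=> w; rewrite /enorm /dot; under eq_bigr do rewrite expr2.
apply: (@le_trans _ _ (enorm u)).
  rewrite !en ler_sqrt //; apply: sumr_ge0 => c _; rewrite -expr2; exact: sqr_ge0.
rewrite /diam; apply: le_trans (bigmax_ge_ord _ _ _ p).
exact: (bigmax_ge_ord _ (fun j => enorm (x p b - x j b)) 0 q).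
Qed.
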